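(* Let $A_1,A_2,A_3,A_4$ be four points in $\mathbb{R}^3$, and write $d_{ij}=|A_iA_j|$ and $\overrightarrow{d}_{ij}=\overrightarrow{A_iA_j}$. Consider the Cayley–Menger determinant $$D=\begin{vmatrix} 0&1&1&1&1\\ 1&0&d_{12}^2&d_{13}^2&d_{14}^2\\ 1&d_{12}^2&0&d_{23}^2&d_{24}^2\\ 1&d_{13}^2&d_{23}^2&0&d_{34}^2\\ 1&d_{14}^2&d_{24}^2&d_{34}^2&0\end{vmatrix}$$ as a polynomial in the six independent variables $d_{12}^2,d_{13}^2,d_{14}^2,d_{23}^2,d_{24}^2,d_{34}^2$. Then: (1) $\displaystyle \frac12\frac{\partial D}{\partial d_{13}^2}=-16\,\langle \overrightarrow{S}_{124},\overrightarrow{S}_{234}\rangle$, where $\overrightarrow{S}_{ijk}=\frac12\,\overrightarrow{d}_{ij}\times\overrightarrow{d}_{jk}$ and $\langle\cdot,\cdot\rangle$ is the standard scalar product of $\mathbb{R}^3$ (the partial derivative being evaluated at the actual squared distances of the four points). (2) If the four points are coplanar, then $\displaystyle \frac12\frac{\partial D}{\partial d_{13}^2}=-16\,S_{124}\,S_{234}$, where $S_{ijk}$ denotes the oriented area of the triangle $A_iA_jA_k$ in that plane (with respect to a fixed orientation of the plane).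
   Context: $\times$ is the cross product in $\mathbb{R}^3$. Oriented area: $S_{ijk}$ is the signed area of triangle $A_iA_jA_k$, so that e.g. $S_{ijk}=-S_{ikj}$ and $|S_{ijk}|=|\overrightarrow{S}_{ijk}|$. *)

(* Defs.v *)
From HB Require Import structures.
From mathcomp Require Import all_boot all_order all_algebra.
Set Implicit Arguments. Unset Strict Implicit. Unset Printing Implicit Defensive.
Import Order.TTheory GRing.Theory Num.Theory.
Local Open Scope ring_scope.

Definition dotp (R : ringType) (u v : 'rV[R]_3) : R := \sum_(k < 3) u 0 k * v 0 k.

(* cross product: (u x v)_k = u_{k+1} v_{k+2} - u_{k+2} v_{k+1} (indices mod 3) *)
Definition crossp (R : ringType) (u v : 'rV[R]_3) : 'rV[R]_3 :=
  \row_(k < 3) (u 0 (inord ((k + 1) %% 3)) * v 0 (inord ((k + 2) %% 3))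
              - u 0 (inord ((k + 2) %% 3)) * v 0 (inord ((k + 1) %% 3))).

Definition sqdist (R : ringType) (P Q : 'rV[R]_3) : R := dotp (Q - P) (Q - P).

Definition Svec (R : fieldType) (Ai Aj Ak : 'rV[R]_3) : 'rV[R]_3 :=
  2^-1 *: crossp (Aj - Ai) (Ak - Aj).

Definition cm_entry (R : ringType) (x12 x13 x14 x23 x24 x34 : R) (i j : nat) : R :=
  if i == j then 0 else
  match minn i j, maxn i j with
  | 0%N, _ => 1
  | 1%N, 2%N => x12
  | 1%N, 3%N => x13
  | 1%N, 4%N => x14
  | 2%N, 3%N => x23
  | 2%N, 4%N => x24
  | 3%N, 4%N => x34
  | _, _ => 0
  end.

Definition CM (R : ringType) (x12 x13 x14 x23 x24 x34 : R) : 'M[R]_5 :=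
  \matrix_(i < 5, j < 5) cm_entry x12 x13 x14 x23 x24 x34 i j.

Definition CMdet (R : comRingType) (x12 x13 x14 x23 x24 x34 : R) : R :=
  \det (CM x12 x13 x14 x23 x24 x34).

(* partial derivative of the polynomial D w.r.t. the variable d13^2,
   evaluated at (x12,...,x34): formal derivative of the univariate
   polynomial obtained by freezing the other five variables. *)
Definition dCM_d13 (R : comRingType) (x12 x13 x14 x23 x24 x34 : R) : R :=
  (CMdet x12%:P 'X x14%:P x23%:P x24%:P x34%:P)^`().[x13].

Definition plane_pt (R : ringType) (P u v : 'rV[R]_3) (p : R * R) : 'rV[R]_3 :=
  P + p.1 *: u + p.2 *: v.

Definition oriented_area (R : fieldType) (p q r : R * R) : R :=
  2^-1 * ((q.1 - p.1) * (r.2 - q.2) - (q.2 - p.2) * (r.1 - q.1)).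

(* Main.v *)
Require Import Defs.
From HB Require Import structures.
From mathcomp Require Import all_boot all_order all_algebra ring.
Set Implicit Arguments. Unset Strict Implicit. Unset Printing Implicit Defensive.
Import Order.TTheory GRing.Theory Num.Theory.
Local Open Scope ring_scope.

Definition cmA (R : comRingType) (x12 x14 x23 x24 x34 : R) : R := - 2 * x24.
Definition cmB (R : comRingType) (x12 x14 x23 x24 x34 : R) : R :=
  2 * x24*x34 - 2 * x24*x24 + 2 * x23*x24 - 2 * x14*x34 + 2 * x12*x34 + 2 * x14*x24 + 2 * x14*x23 + 2 * x12*x24 - 2 * x12*x23.
Definition cmC (R : comRingType) (x12 x14 x23 x24 x34 : R) : R :=
 - 2 * x23*x24*x34 - 2 * x12*x34*x34 + 2 * x12*x23*x34 + 2 * x12*x24*x34 + 2 * x14*x23*x34 + 2 * x14*x23*x24 - 2 * x14*x23*x23 + 2 * x12*x14*x34 - 2 * x14*x14*x23 - 2 * x12*x12*x34 - 2 * x12*x14*x24 + 2 * x12*x14*x23.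

Definition detf (R : comRingType) n (f : nat -> nat -> R) : R :=
  \det (\matrix_(i < n, j < n) f (i : nat) (j : nat)).

Lemma detfS (R : comRingType) n (f : nat -> nat -> R) :
  detf n.+1 f = \sum_(j < n.+1) f 0%N j * ((-1) ^+ j *
     detf n (fun i k => f i.+1 (bump j k))).
Proof.
rewrite /detf (expand_det_row _ ord0); apply: eq_bigr => j _; rewrite /cofactor add0n mxE.
congr (_ * (_ * \det _)); apply/matrixP => i k; rewrite !mxE //.
Qed.

Lemma detf0 (R : comRingType) (f : nat -> nat -> R) : detf 0 f = 1.
Proof. exact: det_mx00. Qed.

Fixpoint ldet (R : comRingType) n (f : nat -> nat -> R) : R :=
  match n with
  | 0%N => 1
  | m.+1 => foldr (fun j acc => f 0%N j * ((-1) ^+ j * ldet m (fun i k => f i.+1 (bump j k))) + acc)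
              0 (iota 0 m.+1)
  end.

Lemma foldr_sum (R : comRingType) (F : nat -> R) s :
  foldr (fun j acc => F j + acc) 0 s = \sum_(j <- s) F j.
Proof. by elim: s => [|a s IH]; rewrite ?big_nil ?big_cons //= IH. Qed.

Lemma detf_ldet (R : comRingType) n (f : nat -> nat -> R) : detf n f = ldet n f.
Proof.
elim: n f => [|n IH] f; first exact: detf0.
rewrite detfS /= foldr_sum.
under eq_bigr do rewrite IH.
rewrite -(big_mkord xpredT (fun i => f 0%N i *
     ((-1) ^+ i * ldet (R:=R) n (fun i0 k : nat => f i0.+1 (bump i k))))) /index_iota subn0 /=.
by rewrite big_cons.
Qed.

Lemma CMdetE (R : comRingType) (x12 x13 x14 x23 x24 x34 : R) :
  CMdet x12 x13 x14 x23 x24 x34 =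
  cmA x12 x14 x23 x24 x34 * x13 ^+ 2 + cmB x12 x14 x23 x24 x34 * x13 + cmC x12 x14 x23 x24 x34.
Proof.
have -> : CMdet x12 x13 x14 x23 x24 x34 = detf 5 (locked (cm_entry x12 x13 x14 x23 x24 x34)).
  by rewrite -lock.
rewrite detf_ldet /=.
rewrite -lock /cm_entry /=.
rewrite /cmA /cmB /cmC.
ring.
Qed.

Lemma dCM_d13E (R : comRingType) (x12 x13 x14 x23 x24 x34 : R) :
  dCM_d13 x12 x13 x14 x23 x24 x34 =
  2 * cmA x12 x14 x23 x24 x34 * x13 + cmB x12 x14 x23 x24 x34.
Proof.
rewrite /dCM_d13 CMdetE.
have -> : cmA x12%:P x14%:P x23%:P x24%:P x34%:P = (cmA x12 x14 x23 x24 x34)%:P.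
  by rewrite /cmA !(rmorphM, rmorphB, rmorphD, rmorphN, rmorph_nat).
have -> : cmB x12%:P x14%:P x23%:P x24%:P x34%:P = (cmB x12 x14 x23 x24 x34)%:P.
  by rewrite /cmB !(rmorphM, rmorphB, rmorphD, rmorphN, rmorph_nat).
have -> : cmC x12%:P x14%:P x23%:P x24%:P x34%:P = (cmC x12 x14 x23 x24 x34)%:P.
  by rewrite /cmC !(rmorphM, rmorphB, rmorphD, rmorphN, rmorph_nat).
rewrite !derivE !hornerE /= /cmA; ring.
Qed.

Lemma sum3 (R : comRingType) (F : 'I_3 -> R) :
  \sum_(k < 3) F k = F (inord 0) + F (inord 1) + F (inord 2).
Proof.
rewrite !big_ord_recr big_ord0 /= add0r.
by congr (F _ + F _ + F _); apply: val_inj; rewrite /= inordK.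
Qed.

Section C.
Variable R : comRingType.
Implicit Types u v w z : 'rV[R]_3.
Notation c u k := (u 0 (inord k)).

Lemma dotpE u v : dotp u v = c u 0 * c v 0 + c u 1 * c v 1 + c u 2 * c v 2.
Proof. by rewrite /dotp sum3. Qed.

Lemma cr0 u v : (crossp u v) 0 (inord 0) = c u 1 * c v 2 - c u 2 * c v 1.
Proof. by rewrite mxE inordK. Qed.
Lemma cr1 u v : (crossp u v) 0 (inord 1) = c u 2 * c v 0 - c u 0 * c v 2.
Proof. by rewrite mxE inordK. Qed.
Lemma cr2 u v : (crossp u v) 0 (inord 2) = c u 0 * c v 1 - c u 1 * c v 0.
Proof. by rewrite mxE inordK. Qed.

Lemma dotp_cross u v w z :
  dotp (crossp u v) (crossp w z) = dotp u w * dotp v z - dotp u z * dotp v w.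
Proof. rewrite !dotpE !cr0 !cr1 !cr2; ring. Qed.

Lemma dotpZ a b u v : dotp (a *: u) (b *: v) = a * b * dotp u v.
Proof. rewrite !dotpE !mxE; ring. Qed.

Lemma dotp_lin a b c' d u v : dotp (a *: u + b *: v) (c' *: u + d *: v)
  = a * c' * dotp u u + (a * d + b * c') * dotp u v + b * d * dotp v v.
Proof. rewrite !dotpE !mxE; ring. Qed.

Lemma crossp_lin a b c' d u v a' b' c'' d' :
  dotp (crossp (a *: u + b *: v) (c' *: u + d *: v))
       (crossp (a' *: u + b' *: v) (c'' *: u + d' *: v))
  = (a * d - b * c') * (a' * d' - b' * c'') * (dotp u u * dotp v v - dotp u v ^+ 2).
Proof. rewrite dotp_cross !dotp_lin; ring. Qed.

Lemma diff_pp P u v p q :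
  plane_pt P u v q - plane_pt P u v p = (q.1 - p.1) *: u + (q.2 - p.2) *: v.
Proof. apply/rowP => i; rewrite !mxE; ring. Qed.
End C.

Theorem theorem1 (R : realFieldType) (A1 A2 A3 A4 : 'rV[R]_3) :
  let dD := dCM_d13 (sqdist A1 A2) (sqdist A1 A3) (sqdist A1 A4)
                    (sqdist A2 A3) (sqdist A2 A4) (sqdist A3 A4) in
  (2^-1 * dD = - 16 * dotp (Svec A1 A2 A4) (Svec A2 A3 A4))
  /\
  (forall (P u v : 'rV[R]_3) (p1 p2 p3 p4 : R * R),
      dotp u u = 1 -> dotp v v = 1 -> dotp u v = 0 ->
      A1 = plane_pt P u v p1 -> A2 = plane_pt P u v p2 ->
      A3 = plane_pt P u v p3 -> A4 = plane_pt P u v p4 ->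
      2^-1 * dD = - 16 * oriented_area p1 p2 p4 * oriented_area p2 p3 p4).
Proof.
move=> dD.
have two : (2 : R) != 0 by rewrite pnatr_eq0.
have H1 : 2^-1 * dD = - 16 * dotp (Svec A1 A2 A4) (Svec A2 A3 A4).
  rewrite /dD dCM_d13E /cmA /cmB /sqdist /Svec dotpZ !dotpE !cr0 !cr1 !cr2 !mxE.
  by field.
split=> // P u v p1 p2 p3 p4 Huu Hvv Huv E1 E2 E3 E4.
rewrite H1 /Svec dotpZ E1 E2 E3 E4 !diff_pp crossp_lin Huu Hvv Huv /oriented_area.
by field.
Qed.
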